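(* In the setting below, the error $e^k=\tilde q_\gamma^k-q_\gamma^k$ of the regularized block Kaczmarz method satisfies, with $\delta_\gamma=\|A^*M_\gamma(\tilde p-p)\|$: (i) if $2\le k\le 2\sigma_\gamma^{-2}$, then $\displaystyle \|e^k\|\le \frac{\delta_\gamma\sigma_\gamma^2}{2\big(1-(1-\sigma_\gamma^2)^{1/2}\big)}\,k$; (ii) if $k>2\sigma_\gamma^{-2}$, then $\displaystyle \|e^k\|\le \frac{\delta_\gamma}{1-(1-\sigma_\gamma^2)^{1/2}}$. Setting: $A_j\in\mathbb{C}^{r_j\times n}$ ($j=1,\dots,m$), $A=\begin{bmatrix}A_1\\ \vdots\\ A_m\end{bmatrix}$ of full row rank, $\gamma>0$, $D_\gamma=\operatorname{diag}(\gamma I+A_1A_1^*,\dots,\gamma I+A_mA_m^* )$, $L$ the strictly block lower triangular matrix with $(i,j)$ block $A_iA_j^*$ for $i>j$, $M_\gamma=(D_\gamma+L)^{-1}$, $R_\gamma=(D_{2\gamma})^{1/2}M_\gamma A$ ($D_{2\gamma}$ = $D_\gamma$ with $\gamma$ replaced by $2\gamma$), $\sigma_\gamma$ the smallest nonzero singular value of $R_\gamma$; $q_\gamma^k$, $\tilde q_\gamma^k$ are the iterates, starting from $0$, of $q^{k+1}=(I-A^*M_\gamma A)q^k+A^*M_\gamma p$ with data $p$, respectively $\tilde p$ (equivalently, of the regularized block Kaczmarz sweep $q_j=q_{j-1}+A_j^*(\gamma I+A_jA_j^* )^{-1}(p_j-A_jq_{j-1})$, $j=1,\dots,m$).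
   Context: $A^*$ is the conjugate transpose; norms are Euclidean / operator 2-norms; $(D_{2\gamma})^{1/2}$ is the Hermitian positive definite square root; $0<\sigma_\gamma\le1$. *)

(* Defs.v *)
From HB Require Import structures.
From mathcomp Require Import all_boot all_order all_algebra.
From mathcomp Require Import sesquilinear spectral.
Set Implicit Arguments. Unset Strict Implicit. Unset Printing Implicit Defensive.
Import Order.TTheory GRing.Theory Num.Theory.
Local Open Scope ring_scope.
Local Open Scope sesquilinear_scope.

(* Conjugate transpose: A^H = A ^t star (i.e. (A^T) ^ conjC), from spectral.v. *)
Definition ctmx (C : numClosedFieldType) m n (A : 'M[C]_(m, n)) : 'M[C]_(n, m) :=
  A ^t*.

Definition vnorm (C : numClosedFieldType) n (v : 'cV[C]_n) : C :=
  sqrtC (\sum_(i < n) `|v i 0| ^+ 2).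

Definition herm_posdef (C : numClosedFieldType) N (S : 'M[C]_N) : Prop :=
  ctmx S = S /\ forall v : 'cV[C]_N, v != 0 -> 0 < (ctmx v *m S *m v) 0 0.

(* s is the smallest nonzero singular value of R, singular values being the
   nonnegative square roots of the eigenvalues of R^H R. *)
Definition smallest_nonzero_sv (C : numClosedFieldType) N n (R : 'M[C]_(N, n))
    (s : C) : Prop :=
  [/\ 0 < s, eigenvalue (ctmx R *m R) (s ^+ 2)
    & forall t : C, 0 < t -> eigenvalue (ctmx R *m R) (t ^+ 2) -> s <= t].

Section BlockKaczmarz.
Variables (C : numClosedFieldType) (m n : nat) (r : 'I_m -> nat).
Variable Ab : forall j : 'I_m, 'M[C]_(r j, n).

Definition stackA : 'M[C]_(\sum_j r j, n) := \mxcol_(j < m) Ab j.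

Definition Dg (g : C) : 'M[C]_(\sum_j r j) :=
  \mxdiag_(j < m) (g%:M + Ab j *m ctmx (Ab j)).

Definition Lblk : 'M[C]_(\sum_j r j) :=
  \mxblock_(i < m, j < m) (if (j < i)%N then Ab i *m ctmx (Ab j) else 0).

Definition Mg (g : C) : 'M[C]_(\sum_j r j) := invmx (Dg g + Lblk).

Fixpoint rbk_iter (g : C) (p : 'cV[C]_(\sum_j r j)) (k : nat) : 'cV[C]_n :=
  match k with
  | 0 => 0
  | k'.+1 => (1%:M - ctmx stackA *m Mg g *m stackA) *m rbk_iter g p k'
             + ctmx stackA *m Mg g *m p
  end.
End BlockKaczmarz.

(* Main.v *)
Require Import Defs.
From HB Require Import structures.
From mathcomp Require Import all_boot all_order all_algebra sesquilinear spectral.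
From mathcomp Require Import ring.
Set Implicit Arguments. Unset Strict Implicit. Unset Printing Implicit Defensive.
Import Order.TTheory GRing.Theory Num.Theory.
Local Open Scope ring_scope.
Local Open Scope sesquilinear_scope.

Definition qf (C : numClosedFieldType) n (x : 'cV[C]_n) : C := (x ^t* *m x) 0 0.

Lemma qfE (C : numClosedFieldType) n (x : 'cV[C]_n) :
  qf x = \sum_(i < n) (x i 0)^* * x i 0.
Proof. by rewrite /qf mxE; apply: eq_bigr => i _; rewrite !mxE. Qed.

Lemma qf_ge0 (C : numClosedFieldType) n (x : 'cV[C]_n) : 0 <= qf x.
Proof. by rewrite qfE sumr_ge0 // => i _; rewrite mulrC mul_conjC_ge0. Qed.

Lemma qf_eq0 (C : numClosedFieldType) n (x : 'cV[C]_n) : qf x = 0 -> x = 0.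
Proof.
rewrite qfE => H0; apply/matrixP => i j; rewrite ord1 mxE.
have nn : forall k : 'I_n, true -> 0 <= (x k 0)^* * x k 0.
  by move=> k _; rewrite mulrC mul_conjC_ge0.
have := psumr_eq0P nn H0 (i:=i) isT.
by rewrite mulrC => /eqP; rewrite mul_conjC_eq0 => /eqP.
Qed.

Lemma vnormE (C : numClosedFieldType) n (x : 'cV[C]_n) : vnorm x = sqrtC (qf x).
Proof. by rewrite /vnorm qfE; congr sqrtC; apply: eq_bigr => i _; rewrite normCK mulrC. Qed.

Lemma vnorm_ge0 (C : numClosedFieldType) n (x : 'cV[C]_n) : 0 <= vnorm x.
Proof. by rewrite vnormE sqrtC_ge0 qf_ge0. Qed.

Lemma qf_dot (C : numClosedFieldType) n (x : 'cV[C]_n) : qf x = dotmx x^T x^T.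
Proof.
rewrite qfE dotmxE mxE; apply: eq_bigr => i _; rewrite !mxE mulrC.
done.
Qed.

Lemma vnormD (C : numClosedFieldType) n (x y : 'cV[C]_n) :
  vnorm (x + y) <= vnorm x + vnorm y.
Proof.
rewrite !vnormE !qf_dot linearD /=.
exact: (triangle_lerif (@dotmx C n) x^T y^T).1.
Qed.

Lemma ctmxM (C : numClosedFieldType) m n p (A : 'M[C]_(m, n)) (B : 'M[C]_(n, p)) :
  (A *m B) ^t* = B ^t* *m A ^t*.
Proof. by rewrite trmx_mul map_mxM. Qed.

Lemma qfM (C : numClosedFieldType) m n (A : 'M[C]_(m, n)) (x : 'cV[C]_n) :
  qf (A *m x) = (x ^t* *m (A ^t* *m A) *m x) 0 0.
Proof. by rewrite /qf ctmxM !mulmxA. Qed.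

Lemma inj_unitmx (C : numClosedFieldType) N (B : 'M[C]_N) :
  (forall v : 'cV[C]_N, B *m v = 0 -> v = 0) -> B \in unitmx.
Proof.
move=> H; rewrite -unitmx_tr -row_free_unit -kermx_eq0; apply/eqP.
apply/row_matrixP => i; rewrite row0.
have : row i (kermx B^T) *m B^T == 0 by rewrite -sub_kermx row_sub.
move=> /eqP /(congr1 trmx); rewrite trmx_mul trmxK trmx0 => /H /(congr1 trmx).
by rewrite trmxK trmx0.
Qed.
Lemma ctmx_mxblock (C : numClosedFieldType) p q (p_ : 'I_p -> nat) (q_ : 'I_q -> nat)
  (B_ : forall i j, 'M[C]_(p_ i, q_ j)) :
  (\mxblock_(i, j) B_ i j) ^t* = \mxblock_(i, j) (B_ j i) ^t*.
Proof. by apply/matrixP => i j; rewrite !mxE. Qed.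

Lemma ctmx_mxcol (C : numClosedFieldType) p (p_ : 'I_p -> nat) n
  (B_ : forall i, 'M[C]_(p_ i, n)) :
  (\mxcol_i B_ i) ^t* = \mxrow_i (B_ i) ^t*.
Proof. by apply/matrixP => i j; rewrite !mxE. Qed.

Lemma ctmxD (C : numClosedFieldType) m n (A B : 'M[C]_(m, n)) :
  (A + B) ^t* = A ^t* + B ^t*.
Proof. by apply/matrixP => i j; rewrite !mxE rmorphD. Qed.


Lemma KKt (C : numClosedFieldType) (m n : nat) (r : 'I_m -> nat)
    (Ab : forall j : 'I_m, 'M[C]_(r j, n)) (g : C) : g^* = g ->
  (Dg Ab g + Lblk Ab) + (Dg Ab g + Lblk Ab) ^t* =
  Dg Ab (2 * g) + stackA Ab *m (stackA Ab) ^t*.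
Proof.
move=> gR.
rewrite /Dg /Lblk /stackA /mxdiag /ctmx ctmx_mxcol mul_mxcol_mxrow.
rewrite ctmxD !ctmx_mxblock -!mxblockD; apply/eq_mxblock => i j.
case: (eqVneq i j) => [<-|neq].
  rewrite !conform_mx_id ltnn !addr0 ctmxD ctmxM trmxCK.
  have -> : (g%:M : 'M[C]_(r i)) ^t* = g%:M.
    by apply/matrixP => a b; rewrite !mxE eq_sym; case: eqP => _; rewrite ?gR ?mulr0n ?mulr1n ?conjC0.
  have z0 : forall a b, (0 : 'M[C]_(a, b)) ^t* = 0.
    by move=> a b; apply/matrixP => ? ?; rewrite !mxE conjC0.
  rewrite z0 addr0 mulr_natl mulr2n (raddfD scalar_mx).
  by rewrite addrACA -!addrA; congr (_ + (_ + _)); rewrite addrC.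
have z0 : forall a b, (0 : 'M[C]_(a, b)) ^t* = 0.
  by move=> a b; apply/matrixP => ? ?; rewrite !mxE conjC0.
rewrite z0 !add0r; case: (ltngtP i j) => [lij|lji|eij].
- by rewrite add0r ctmxM trmxCK.
- by rewrite z0 addr0.
- by move: neq; rewrite (val_inj eij) eqxx.
Qed.
Lemma ctmxN (C : numClosedFieldType) m n (A : 'M[C]_(m, n)) : (- A) ^t* = - A ^t*.
Proof. by apply/matrixP => i j; rewrite !mxE rmorphN. Qed.

Lemma ctmx1 (C : numClosedFieldType) n : (1%:M : 'M[C]_n) ^t* = 1%:M.
Proof. by rewrite trmx1 map_mx1. Qed.

Lemma TtT (C : numClosedFieldType) N n (A : 'M[C]_(N, n)) (K S : 'M[C]_N) :
  K \in unitmx -> S ^t* = S -> K + K ^t* = S *m S + A *m A ^t* ->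
  (1%:M - A ^t* *m invmx K *m A) ^t* *m (1%:M - A ^t* *m invmx K *m A) =
  1%:M - (S *m invmx K *m A) ^t* *m (S *m invmx K *m A).
Proof.
move=> Ku St KK; set M := invmx K.
have KM : K *m M = 1%:M by rewrite mulmxV.
have MK : M *m K = 1%:M by rewrite mulVmx.
have MtKt : M ^t* *m K ^t* = 1%:M by rewrite -ctmxM KM ctmx1.
have SS : S *m S = K + K ^t* - A *m A ^t* by rewrite KK addrK.
have E : (S *m M *m A) ^t* *m (S *m M *m A) =
   A ^t* *m M ^t* *m A + A ^t* *m M *m A - A ^t* *m M ^t* *m A *m (A ^t* *m M *m A).
  rewrite !ctmxM St !mulmxA -[A ^t* *m M ^t* *m S *m S]mulmxA -[A ^t* *m M ^t* *m (S *m S)]mulmxA SS.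
  rewrite !(mulmxDr, mulmxDl, mulmxN, mulNmx) !mulmxA.
  rewrite -[A ^t* *m M ^t* *m K *m M]mulmxA KM mulmx1.
  by rewrite -[A ^t* *m M ^t* *m K ^t*]mulmxA MtKt mulmx1.
rewrite E ctmxD ctmxN ctmx1 !ctmxM trmxCK.
rewrite !(mulmxBr, mulmxBl, mulmx1, mul1mx) !mulmxA.
set X := A ^t* *m M ^t* *m A; set Y := A ^t* *m M *m A; set Z := A ^t* *m M ^t* *m A *m A ^t* *m M *m A.
by rewrite !opprB !opprD !addrA; congr (_ - _); rewrite addrAC.
Qed.
Lemma spec_bound (C : numClosedFieldType) N n (R : 'M[C]_(N, n)) (s : C) (x : 'cV[C]_n) :
  smallest_nonzero_sv R s ->
  (forall z : 'cV[C]_n, R *m z = 0 -> z ^t* *m x = 0) ->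
  s ^+ 2 * qf x <= qf (R *m x).
Proof.
rewrite /smallest_nonzero_sv /ctmx => -[s0 _ smin] Hk.
set H := R ^t* *m R.
have Ht : H ^t* = H by rewrite /H ctmxM trmxCK.
have Hn : H \is normalmx by apply/normalmxP; rewrite Ht.
have /orthomx_spectralP HE := Hn.
set P := spectralmx H in HE; set d := spectral_diag H in HE.
have Pu : P \is unitarymx := spectral_unitarymx H.
have Punit := unitarymx_unit Pu.
have PtP : P ^t* *m P = 1%:M by rewrite -invmx_unitary // mulVmx.
set u := P *m x.
have qfu : qf x = qf u by rewrite /u qfM PtP mulmx1.
have PH : P *m H = diag_mx d *m P.
  by rewrite {1}HE !mulmxA mulmxV // mul1mx.
have qfRx : qf (R *m x) = \sum_i (u i 0)^* * d 0 i * u i 0.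
  rewrite qfM -/H HE invmx_unitary // !mulmxA -[x ^t* *m P ^t*]ctmxM -/u.
  rewrite -mulmxA mxE; apply: eq_bigr => i _; rewrite mul_mx_diag !mxE.
  done.
rewrite qfRx qfu qfE mulr_sumr; apply: ler_sum => i _.
set w := row i P.
have wH : w *m H = d 0 i *: w.
  rewrite /w -row_mul PH mul_diag_mx; apply/rowP => k; rewrite !mxE.
  done.
have uiE : u i 0 = (w *m x) 0 0 by rewrite /u !mxE; apply: eq_bigr => k _; rewrite !mxE.
have w1 : dotmx w w = 1 by move/row_unitarymxP: Pu => /(_ i i); rewrite eqxx.
have dE : d 0 i = qf (R *m w ^t*).
  rewrite qfM trmxCK -/H wH -scalemxAl mxE -dotmxE w1 mulr1.
  done.
have d0 : 0 <= d 0 i by rewrite dE qf_ge0.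
have cu : 0 <= (u i 0)^* * u i 0 by rewrite mulrC mul_conjC_ge0.
case: (eqVneq (d 0 i) 0) => [dz|dnz].
  have : R *m w ^t* = 0 by apply: qf_eq0; rewrite -dE.
  move/Hk; rewrite trmxCK => wx.
  have ui0 : u i 0 = 0 by rewrite uiE wx mxE.
  by rewrite ui0 conjC0 !mul0r mulr0.
have dpos : 0 < d 0 i by rewrite lt_def dnz d0.
have ev : eigenvalue H (sqrtC (d 0 i) ^+ 2).
  rewrite sqrtCK; apply/eigenvalueP; exists w => //.
  apply/eqP => w0; move: w1; rewrite w0 dotmxE mul0mx mxE => /eqP.
  by rewrite eq_sym oner_eq0.
have := smin _ _ ev; rewrite sqrtC_gt0 => /(_ dpos) sle.
have s2 : s ^+ 2 <= d 0 i.
  by rewrite -[d 0 i]sqrtCK ler_sqr // nnegrE ?sqrtC_ge0 ?ltW.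
by rewrite [X in _ <= X]mulrAC [X in _ <= X]mulrC; apply: ler_wpM2r.
Qed.
Lemma qf_sub (C : numClosedFieldType) n (T H : 'M[C]_n) (x : 'cV[C]_n) :
  T ^t* *m T = 1%:M - H -> qf (T *m x) = qf x - (x ^t* *m H *m x) 0 0.
Proof.
have sB : forall (P Q : 'M[C]_1), (P - Q) 0 0 = P 0 0 - Q 0 0 by move=> P Q; rewrite !mxE.
by move=> E; rewrite qfM E mulmxBr mulmxBl mulmx1 sB.
Qed.

Lemma setup (C : numClosedFieldType) (m n : nat) (r : 'I_m -> nat)
    (Ab : forall j : 'I_m, 'M[C]_(r j, n))
    (gamma : C) (S : 'M[C]_(\sum_j r j)) (sigma : C) :
  0 < gamma ->
  herm_posdef S ->
  S *m S = Dg Ab (2 * gamma) ->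
  smallest_nonzero_sv (S *m Mg Ab gamma *m stackA Ab) sigma ->
  let A := stackA Ab in let M := Mg Ab gamma in
  let T := 1%:M - A ^t* *m M *m A in
  sigma ^+ 2 <= 1 /\
  forall y, qf (T *m (A ^t* *m y)) <= (1 - sigma ^+ 2) * qf (A ^t* *m y).
Proof.
move=> g0 [St Spd] SS svR A M T.
rewrite /ctmx in St.
have gR : gamma^* = gamma by rewrite conj_Creal // gtr0_real.
set K := Dg Ab gamma + Lblk Ab.
have KK : K + K ^t* = S *m S + A *m A ^t* by rewrite SS KKt.
have Sinj : forall v : 'cV[C]_(\sum_j r j), S *m v = 0 -> v = 0.
  move=> v Sv; case: (eqVneq v 0) => // vn0; have := Spd v vn0.
  by rewrite /ctmx -mulmxA Sv mulmx0 mxE ltxx.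
have Ku : K \in unitmx.
  apply: inj_unitmx => v Kv.
  have : (v ^t* *m (K + K ^t*) *m v) 0 0 = 0.
    rewrite mulmxDr mulmxDl -mulmxA Kv mulmx0 add0r -ctmxM Kv.
    by rewrite trmx0 map_mx0 mul0mx mxE.
  rewrite KK mulmxDr mulmxDl mxE.
  have -> : (v ^t* *m (S *m S) *m v) 0 0 = qf (S *m v) by rewrite qfM St mulmxA.
  have -> : (v ^t* *m (A *m A ^t*) *m v) 0 0 = qf (A ^t* *m v) by rewrite qfM trmxCK mulmxA.
  move/eqP; rewrite paddr_eq0 ?qf_ge0 // => /andP[/eqP /qf_eq0 /Sinj] //.
have Mu : M \in unitmx by rewrite unitmx_inv.
have TT := TtT Ku St KK.
rewrite -/M -/T in TT.
set R := S *m M *m A in TT svR.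
have qfT : forall x, qf (T *m x) = qf x - qf (R *m x).
  by move=> x; rewrite (qf_sub x TT) qfM.
split.
  case: (svR) => _ /eigenvalueP [w wH w0] _.
  set z := w ^t*.
  have zq : qf (R *m z) = sigma ^+ 2 * qf z.
    rewrite qfM /z trmxCK /ctmx in wH *; rewrite wH -scalemxAl mxE.
    by rewrite /qf trmxCK.
  have zpos : 0 < qf z.
    rewrite lt_def qf_ge0 andbT; apply/eqP => /qf_eq0 z0; move/eqP: w0; apply.
    by rewrite -[w]trmxCK -/z z0 trmx0 map_mx0.
  have := qf_ge0 (T *m z); rewrite qfT zq -{1}[qf z]mul1r -mulrBl pmulr_lge0 //.
  by rewrite subr_ge0.
move=> y; rewrite qfT mulrBl mul1r; apply: lerB => //.
apply: spec_bound => // z Rz.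
have Az : A *m z = 0.
  have : S *m (M *m (A *m z)) = 0 by rewrite !mulmxA.
  move/Sinj => MAz.
  by rewrite -[A *m z]mul1mx -(mulVmx Mu) -mulmxA MAz mulmx0.
by rewrite mulmxA -ctmxM Az trmx0 map_mx0 mul0mx.
Qed.

Unset Implicit Arguments.
Theorem corollary3p3 (C : numClosedFieldType) (m n : nat) (r : 'I_m -> nat)
    (Ab : forall j : 'I_m, 'M[C]_(r j, n))
    (gamma : C) (p pt : 'cV[C]_(\sum_j r j))
    (S : 'M[C]_(\sum_j r j)) (sigma : C) :
  row_free (stackA Ab) ->
  0 < gamma ->
  herm_posdef S ->
  S *m S = Dg Ab (2 * gamma) ->
  smallest_nonzero_sv (S *m Mg Ab gamma *m stackA Ab) sigma ->
  let delta := vnorm (ctmx (stackA Ab) *m Mg Ab gamma *m (pt - p)) in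
  let e := fun k => rbk_iter Ab gamma pt k - rbk_iter Ab gamma p k in
  (forall k : nat, (2 <= k)%N -> k%:R <= 2 / sigma ^+ 2 ->
     vnorm (e k) <= delta * sigma ^+ 2 / (2 * (1 - sqrtC (1 - sigma ^+ 2))) * k%:R)
  /\
  (forall k : nat, 2 / sigma ^+ 2 < k%:R ->
     vnorm (e k) <= delta / (1 - sqrtC (1 - sigma ^+ 2))).
Proof.
move=> _ g0 Hpd SS svR delta e.
have s0 : 0 < sigma by case: svR.
move: (setup g0 Hpd SS svR) => /= [s1 contr].
set A := stackA Ab in contr *; set M := Mg Ab gamma in contr *.
set T := 1%:M - A ^t* *m M *m A in contr.
set v0 := A ^t* *m M *m (pt - p).
have dE : delta = vnorm v0 by [].
set rho := sqrtC (1 - sigma ^+ 2).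
have rho0 : 0 <= rho by rewrite sqrtC_ge0 subr_ge0.
have rho2 : rho ^+ 2 = 1 - sigma ^+ 2 by rewrite sqrtCK.
have rho1 : rho < 1.
  rewrite -ltr_sqr ?nnegrE // expr1n rho2 ltrBlDr ltrDl.
  by rewrite exprn_gt0.
have d0 : 0 <= delta by apply: vnorm_ge0.
have e0 : e 0 = 0 by rewrite /e /= subrr.
have eS : forall k, e k.+1 = T *m e k + v0.
  move=> k; rewrite /e /= /ctmx -/A -/M -/T /v0 !(mulmxDr, mulmxN).
  by rewrite opprD addrACA.
have erange : forall k, exists y, e k = A ^t* *m y.
  elim=> [|k [y ey]]; first by exists 0; rewrite e0 mulmx0.
  exists (y - M *m A *m (A ^t* *m y) + M *m (pt - p)).
  rewrite eS ey /T /v0 !(mulmxDl, mulmxDr, mulmxN, mulNmx) mul1mx !mulmxA.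
  done.
have contrN : forall k, vnorm (T *m e k) <= rho * vnorm (e k).
  move=> k; have [y ey] := erange k; rewrite ey !vnormE /rho.
  rewrite -sqrtCM ?nnegrE ?subr_ge0 ?qf_ge0 // ler_sqrtC ?nnegrE ?qf_ge0 //.
  by rewrite mulr_ge0 ?subr_ge0 ?qf_ge0.
have step : forall k, vnorm (e k.+1) <= rho * vnorm (e k) + delta.
  move=> k; rewrite eS dE; apply: le_trans (vnormD _ _) _.
  by rewrite lerD2r.
have nz1 : 1 - rho != 0 by rewrite subr_eq0 eq_sym lt_eqF.
have bnd2 : forall k, vnorm (e k) <= delta / (1 - rho).
  elim=> [|k IH]; first by rewrite e0 vnormE /qf mulmx0 mxE sqrtC0 divr_ge0 // subr_ge0 ltW.
  apply: le_trans (step k) _.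
  have -> : delta / (1 - rho) = rho * (delta / (1 - rho)) + delta by field.
  by rewrite lerD2r ler_wpM2l.
have bnd1 : forall k, vnorm (e k.+1) <= delta * (1 + k%:R * rho).
  elim=> [|k IH].
    by rewrite eS e0 mulmx0 add0r -dE mul0r addr0 mulr1.
  apply: le_trans (step k.+1) _.
  apply: le_trans (_ : rho * (delta * (1 + k%:R * rho)) + delta <= _).
    by rewrite lerD2r ler_wpM2l.
  rewrite -subr_ge0.
  have -> : delta * (1 + k.+1%:R * rho) - (rho * (delta * (1 + k%:R * rho)) + delta)
            = delta * k%:R * rho * (1 - rho) by rewrite -natr1; ring.
  apply: mulr_ge0; last by rewrite subr_ge0 ltW.
  by apply: mulr_ge0 => //; apply: mulr_ge0; rewrite ?ler0n.
split.
  case=> [//|[//|j]] _ _.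
  apply: le_trans (bnd1 j.+1) _.
  have sig2 : sigma ^+ 2 = 1 - rho ^+ 2 by rewrite rho2 subKr.
  rewrite sig2 -subr_ge0.
  have -> : delta * (1 - rho ^+ 2) / (2 * (1 - rho)) * j.+2%:R - delta * (1 + j.+1%:R * rho)
            = delta * j%:R * (1 - rho) / 2.
    rewrite -!natr1; field.
    exact: nz1.
  apply: divr_ge0; last by rewrite ler0n.
  apply: mulr_ge0; last by rewrite subr_ge0 ltW.
  by apply: mulr_ge0; rewrite ?ler0n.
by move=> k _; apply: bnd2.
Qed.
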